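(* Let $X$ be a real $\omega$-LUR Banach space in which there is a big point $u\in S_X$. Then $X$ is convex-transitive.
   Context: $X$ is $\omega$-LUR if for every $x\in S_X$ and every $(x_n)\subset B_X$ with $\|x+x_n\|\to 2$ one has $x_n\to x$ weakly. $\mathcal{G}_X$ is the group of surjective linear isometries of $X$; $x\in S_X$ is a big point if $\overline{\mathrm{conv}}(\{T(x):T\in\mathcal{G}_X\})=B_X$; $X$ is convex-transitive if every $x\in S_X$ is a big point. *)

(* Defs.v *)
From Stdlib Require Import Reals Lra List.
Open Scope R_scope.

Record NormedSpace := {
  car :> Type;
  vzero : car;
  vadd : car -> car -> car;
  vopp : car -> car;
  vscal : R -> car -> car;
  vnorm : car -> R;
  vadd_assoc : forall x y z, vadd x (vadd y z) = vadd (vadd x y) z;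
  vadd_comm : forall x y, vadd x y = vadd y x;
  vadd_0 : forall x, vadd x vzero = x;
  vadd_opp : forall x, vadd x (vopp x) = vzero;
  vscal_1 : forall x, vscal 1 x = x;
  vscal_assoc : forall a b x, vscal a (vscal b x) = vscal (a * b) x;
  vscal_distr_v : forall a x y, vscal a (vadd x y) = vadd (vscal a x) (vscal a y);
  vscal_distr_s : forall a b x, vscal (a + b) x = vadd (vscal a x) (vscal b x);
  vnorm_eq0 : forall x, vnorm x = 0 -> x = vzero;
  vnorm_scal : forall a x, vnorm (vscal a x) = Rabs a * vnorm x;
  vnorm_triangle : forall x y, vnorm (vadd x y) <= vnorm x + vnorm y
}.

Arguments vzero {n}.
Arguments vadd {n}.
Arguments vopp {n}.
Arguments vscal {n}.
Arguments vnorm {n}.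

Definition vsub {X : NormedSpace} (x y : X) : X := vadd x (vopp y).

Definition complete (X : NormedSpace) : Prop :=
  forall u : nat -> X,
    (forall eps, eps > 0 -> exists N, forall n m, (n >= N)%nat -> (m >= N)%nat ->
        vnorm (vsub (u n) (u m)) < eps) ->
    exists l : X, forall eps, eps > 0 -> exists N, forall n, (n >= N)%nat ->
        vnorm (vsub (u n) l) < eps.

Definition S_X {X : NormedSpace} (x : X) : Prop := vnorm x = 1.
Definition B_X {X : NormedSpace} (x : X) : Prop := vnorm x <= 1.

Definition is_linear {X Y : NormedSpace} (T : X -> Y) : Prop :=
  (forall x y, T (vadd x y) = vadd (T x) (T y)) /\
  (forall a x, T (vscal a x) = vscal a (T x)).

Definition is_dual_elt {X : NormedSpace} (f : X -> R) : Prop :=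
  (forall x y, f (vadd x y) = f x + f y) /\
  (forall a x, f (vscal a x) = a * f x) /\
  (exists M, forall x, Rabs (f x) <= M * vnorm x).

Definition weak_cv {X : NormedSpace} (u : nat -> X) (x : X) : Prop :=
  forall f : X -> R, is_dual_elt f -> Un_cv (fun n => f (u n)) (f x).

Definition omega_LUR (X : NormedSpace) : Prop :=
  forall (x : X) (u : nat -> X),
    S_X x -> (forall n, B_X (u n)) ->
    Un_cv (fun n => vnorm (vadd x (u n))) 2 ->
    weak_cv u x.

Definition in_GX {X : NormedSpace} (T : X -> X) : Prop :=
  is_linear T /\ (forall x, vnorm (T x) = vnorm x) /\
  (forall y, exists x, T x = y).

Fixpoint comb {X : NormedSpace} (l : list (R * X)) : X :=
  match l with
  | nil => vzero
  | (a, x) :: l' => vadd (vscal a x) (comb l')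
  end.

Fixpoint coef_sum {X : NormedSpace} (l : list (R * X)) : R :=
  match l with
  | nil => 0
  | (a, _) :: l' => a + coef_sum l'
  end.

Definition conv {X : NormedSpace} (A : X -> Prop) (z : X) : Prop :=
  exists l : list (R * X),
    Forall (fun p => 0 <= fst p /\ A (snd p)) l /\
    coef_sum l = 1 /\ z = comb l.

Definition closure {X : NormedSpace} (A : X -> Prop) (z : X) : Prop :=
  forall eps, eps > 0 -> exists y, A y /\ vnorm (vsub z y) < eps.

Definition closed_conv {X : NormedSpace} (A : X -> Prop) : X -> Prop :=
  closure (conv A).

Definition orbit {X : NormedSpace} (x : X) (y : X) : Prop :=
  exists T : X -> X, in_GX T /\ y = T x.

Definition big_point {X : NormedSpace} (x : X) : Prop :=
  S_X x /\ forall z, closed_conv (orbit x) z <-> B_X z.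

Definition convex_transitive (X : NormedSpace) : Prop :=
  forall x : X, S_X x -> big_point x.

(* Main.v *)
Require Import Defs.
From Stdlib Require Import Reals Lra List Classical ClassicalEpsilon FunctionalExtensionality PropExtensionality.
Open Scope R_scope.

Arguments vadd_assoc {n}. Arguments vadd_comm {n}. Arguments vadd_0 {n}. Arguments vadd_opp {n}.
Arguments vscal_1 {n}. Arguments vscal_assoc {n}. Arguments vscal_distr_v {n}. Arguments vscal_distr_s {n}.
Arguments vnorm_eq0 {n}. Arguments vnorm_scal {n}. Arguments vnorm_triangle {n}.

Lemma vadd_0l {X : NormedSpace} (x : X) : vadd vzero x = x.
Proof. rewrite vadd_comm; apply vadd_0. Qed.

Lemma vadd_cancel_l {X : NormedSpace} (x y z : X) : vadd x y = vadd x z -> y = z.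
Proof.
  intro H. rewrite <- (vadd_0l y), <- (vadd_0l z).
  rewrite <- (vadd_opp x), (vadd_comm x (vopp x)), <- !vadd_assoc, H. reflexivity.
Qed.

Lemma vscal_0 {X : NormedSpace} (x : X) : vscal 0 x = vzero.
Proof.
  apply (vadd_cancel_l (vscal 0 x)). rewrite vadd_0, <- vscal_distr_s.
  f_equal; ring.
Qed.

Lemma vscal_zero {X : NormedSpace} (a : R) : vscal a (@vzero X) = vzero.
Proof. rewrite <- (vscal_0 vzero), vscal_assoc. rewrite Rmult_0_r. reflexivity. Qed.

Lemma vopp_scal {X : NormedSpace} (x : X) : vopp x = vscal (-1) x.
Proof.
  apply (vadd_cancel_l x). rewrite vadd_opp.
  rewrite <- (vscal_1 x) at 1. rewrite <- vscal_distr_s.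
  replace (1 + -1) with 0 by ring. rewrite vscal_0; reflexivity.
Qed.

Lemma vsub_self {X : NormedSpace} (x : X) : vadd x (vscal (-1) x) = vzero.
Proof. rewrite <- vopp_scal; apply vadd_opp. Qed.

Lemma vsub_scal {X : NormedSpace} (x y : X) : vsub x y = vadd x (vscal (-1) y).
Proof. unfold vsub; rewrite vopp_scal; reflexivity. Qed.

Lemma vnorm_zero {X : NormedSpace} : vnorm (@vzero X) = 0.
Proof. rewrite <- (vscal_0 vzero), vnorm_scal, Rabs_R0; ring. Qed.

Lemma vnorm_opp1 {X : NormedSpace} (x : X) : vnorm (vscal (-1) x) = vnorm x.
Proof. rewrite vnorm_scal. replace (Rabs (-1)) with 1. ring. rewrite Rabs_left; lra. Qed.

Lemma vnorm_nonneg {X : NormedSpace} (x : X) : 0 <= vnorm x.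
Proof.
  pose proof (vnorm_triangle x (vscal (-1) x)) as H.
  rewrite vnorm_opp1, vsub_self, vnorm_zero in H. lra.
Qed.

Lemma vadd_shuffle {X : NormedSpace} (a b c d : X) :
  vadd (vadd a b) (vadd c d) = vadd (vadd a c) (vadd b d).
Proof.
  rewrite <- !vadd_assoc. f_equal. rewrite !vadd_assoc. f_equal. apply vadd_comm.
Qed.

Lemma vscal_add_same {X : NormedSpace} (a b : R) (x : X) :
  vadd (vscal a x) (vscal b x) = vscal (a + b) x.
Proof. rewrite vscal_distr_s; reflexivity. Qed.


Lemma vsub_norm_sym {X : NormedSpace} (x y : X) :
  vnorm (vadd x (vscal (-1) y)) = vnorm (vadd y (vscal (-1) x)).
Proof.
  rewrite <- vnorm_opp1, vscal_distr_v, vscal_assoc.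
  replace (-1 * -1) with 1 by ring. rewrite vscal_1, vadd_comm. reflexivity.
Qed.

Lemma vnorm_rev {X : NormedSpace} (x y : X) :
  vnorm x - vnorm y <= vnorm (vadd x (vscal (-1) y)).
Proof.
  pose proof (vnorm_triangle (vadd x (vscal (-1) y)) y) as H.
  rewrite <- vadd_assoc, (vadd_comm (vscal (-1) y) y), vsub_self, vadd_0 in H. lra.
Qed.

Lemma vnorm_sub_tri {X : NormedSpace} (x y z : X) :
  vnorm (vadd x (vscal (-1) z)) <= vnorm (vadd x (vscal (-1) y)) + vnorm (vadd y (vscal (-1) z)).
Proof.
  etransitivity; [|apply vnorm_triangle]. right. f_equal.
  rewrite <- vadd_assoc. f_equal. rewrite vadd_assoc, (vadd_comm _ y), vsub_self, vadd_0l. reflexivity.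
Qed.


Definition scale_list {X : NormedSpace} (t : R) (l : list (R * X)) : list (R * X) :=
  map (fun p => (t * fst p, snd p)) l.

Lemma comb_app {X : NormedSpace} (l1 l2 : list (R * X)) :
  comb (l1 ++ l2) = vadd (comb l1) (comb l2).
Proof.
  induction l1 as [|[a y] l IH]; simpl. rewrite vadd_0l; auto.
  rewrite IH, vadd_assoc; auto.
Qed.

Lemma coef_app {X : NormedSpace} (l1 l2 : list (R * X)) :
  coef_sum (l1 ++ l2) = coef_sum l1 + coef_sum l2.
Proof. induction l1 as [|[a y] l IH]; simpl. ring. rewrite IH; ring. Qed.

Lemma comb_scale {X : NormedSpace} t (l : list (R * X)) :
  comb (scale_list t l) = vscal t (comb l).
Proof.
  induction l as [|[a y] l IH]; simpl. rewrite vscal_zero; auto.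
  rewrite IH, vscal_distr_v, vscal_assoc; auto.
Qed.

Lemma coef_scale {X : NormedSpace} t (l : list (R * X)) :
  coef_sum (scale_list t l) = t * coef_sum l.
Proof. induction l as [|[a y] l IH]; simpl. ring. rewrite IH; ring. Qed.

Lemma Forall_scale {X : NormedSpace} (A : X -> Prop) t (l : list (R * X)) :
  0 <= t -> Forall (fun p => 0 <= fst p /\ A (snd p)) l ->
  Forall (fun p => 0 <= fst p /\ A (snd p)) (scale_list t l).
Proof.
  intros Ht H. induction H as [|[a y] l [H1 H2] H IH]; simpl; constructor; auto.
  simpl in *. split; auto. apply Rmult_le_pos; auto.
Qed.

Definition mapv {X : NormedSpace} (f : X -> X) (l : list (R * X)) : list (R * X) :=
  map (fun p => (fst p, f (snd p))) l.

Lemma coef_mapv {X : NormedSpace} f (l : list (R * X)) : coef_sum (mapv f l) = coef_sum l.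
Proof. induction l as [|[a y] l IH]; simpl; auto. rewrite IH; auto. Qed.

Lemma comb_shift {X : NormedSpace} (x : X) (l : list (R * X)) :
  comb (mapv (vadd x) l) = vadd (vscal (coef_sum l) x) (comb l).
Proof.
  induction l as [|[a y] l IH]; simpl. rewrite vscal_0, vadd_0; auto.
  rewrite IH, vscal_distr_v, vadd_shuffle, vscal_add_same; auto.
Qed.

Fixpoint wsum {X : NormedSpace} (l : list (R * X)) : R :=
  match l with nil => 0 | (a, y) :: l' => a * vnorm y + wsum l' end.

Lemma norm_comb {X : NormedSpace} (l : list (R * X)) :
  Forall (fun p => 0 <= fst p) l -> vnorm (comb l) <= wsum l.
Proof.
  intro H; induction H as [|[a y] l H1 H IH]; simpl in *. rewrite vnorm_zero; lra.
  eapply Rle_trans; [apply vnorm_triangle|]. rewrite vnorm_scal, Rabs_pos_eq by auto. lra.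
Qed.

Lemma wsum_bound {X : NormedSpace} (M : R) (l : list (R * X)) :
  Forall (fun p => 0 <= fst p /\ vnorm (snd p) <= M) l -> wsum l <= coef_sum l * M.
Proof.
  intro H; induction H as [|[a y] l [H1 H2] H IH]; simpl in *. lra.
  assert (a * vnorm y <= a * M) by (apply Rmult_le_compat_l; auto). nra.
Qed.

Lemma Forall_weaken {A : Type} (P Q : A -> Prop) l :
  (forall x, P x -> Q x) -> Forall P l -> Forall Q l.
Proof. intros H HF; induction HF; constructor; auto. Qed.

Lemma lin_zero {X : NormedSpace} (T : X -> X) : is_linear T -> T vzero = vzero.
Proof.
  intros [_ H]. transitivity (T (vscal 0 vzero)). rewrite vscal_0; auto. rewrite H, vscal_0. reflexivity.
Qed.

Lemma lin_comb {X : NormedSpace} (T : X -> X) (l : list (R * X)) :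
  is_linear T -> T (comb l) = comb (mapv T l).
Proof.
  intro HT. induction l as [|[a y] l IH]; simpl. apply lin_zero; auto.
  destruct HT as [H1 H2]. rewrite H1, H2, <- IH. reflexivity.
Qed.

Lemma lin_sub {X : NormedSpace} (T : X -> X) (x y : X) :
  is_linear T -> T (vadd x (vscal (-1) y)) = vadd (T x) (vscal (-1) (T y)).
Proof. intros [H1 H2]. rewrite H1, H2. reflexivity. Qed.

Lemma GX_id {X : NormedSpace} : in_GX (fun z : X => z).
Proof. split; [split; auto|split; auto]. intro y; exists y; auto. Qed.

Lemma GX_comp {X : NormedSpace} (T S : X -> X) :
  in_GX T -> in_GX S -> in_GX (fun z => T (S z)).
Proof.
  intros [[T1 T2] [T3 T4]] [[S1 S2] [S3 S4]]. split; [split|split].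
  - intros; rewrite S1, T1; auto.
  - intros; rewrite S2, T2; auto.
  - intros; rewrite T3, S3; auto.
  - intros y. destruct (T4 y) as [w Hw]. destruct (S4 w) as [v Hv]. exists v. subst; auto.
Qed.

Lemma GX_neg {X : NormedSpace} : in_GX (fun z : X => vscal (-1) z).
Proof.
  split; [split|split].
  - intros; apply vscal_distr_v.
  - intros; rewrite !vscal_assoc, Rmult_comm; auto.
  - intros; apply vnorm_opp1.
  - intros y. exists (vscal (-1) y). rewrite vscal_assoc. replace (-1 * -1) with 1 by ring. apply vscal_1.
Qed.

Lemma GX_inj {X : NormedSpace} (T : X -> X) : in_GX T -> forall a b, T a = T b -> a = b.
Proof.
  intros [HL [HN _]] a b E.
  assert (E2 : T (vadd a (vscal (-1) b)) = vzero) by (rewrite lin_sub, E, vsub_self; auto).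
  assert (vnorm (vadd a (vscal (-1) b)) = 0) by (rewrite <- HN, E2; apply vnorm_zero).
  apply vnorm_eq0 in H.
  assert (E3 : vadd (vadd a (vscal (-1) b)) b = vadd vzero b) by (rewrite H; auto).
  rewrite <- vadd_assoc, (vadd_comm _ b), vsub_self, vadd_0, vadd_0l in E3. auto.
Qed.

Lemma GX_inv {X : NormedSpace} (T : X -> X) : in_GX T ->
  exists S, in_GX S /\ forall z, T (S z) = z.
Proof.
  intros HT. pose proof HT as [[H1 H2] [H3 H4]].
  destruct (choice (fun z w => T w = z) H4) as [S HS].
  exists S; split; auto. split; [split|split].
  - intros x y. apply (GX_inj T HT). rewrite H1, !HS; auto.
  - intros a x. apply (GX_inj T HT). rewrite H2, !HS; auto.
  - intros x. rewrite <- H3, HS; auto.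
  - intros y. exists (T y). apply (GX_inj T HT). rewrite HS; auto.
Qed.

Lemma orbit_T {X : NormedSpace} (x y : X) (T : X -> X) :
  in_GX T -> orbit x y -> orbit x (T y).
Proof. intros HT [S [HS ->]]. exists (fun z => T (S z)); split; auto. apply GX_comp; auto. Qed.

Lemma orbit_self {X : NormedSpace} (x : X) : orbit x x.
Proof. exists (fun z => z); split; auto. apply GX_id. Qed.

Lemma orbit_norm {X : NormedSpace} (x y : X) : orbit x y -> vnorm y = vnorm x.
Proof. intros [T [[_ [H _]] ->]]; auto. Qed.

Lemma Forall_mapv {X : NormedSpace} (A B : X -> Prop) (f : X -> X) l :
  (forall y, A y -> B (f y)) ->
  Forall (fun p => 0 <= fst p /\ A (snd p)) l ->
  Forall (fun p => 0 <= fst p /\ B (snd p)) (mapv f l).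
Proof.
  intros Hf H. induction H as [|[a y] l [H1 H2] H IH]; simpl in *; constructor; simpl; auto.
Qed.

Lemma conv_T {X : NormedSpace} (x y : X) (T : X -> X) :
  in_GX T -> conv (orbit x) y -> conv (orbit x) (T y).
Proof.
  intros HT [l [Hl [Hs ->]]]. exists (mapv T l). split; [|split].
  - apply Forall_mapv with (A := orbit x); auto. intros; apply orbit_T; auto.
  - rewrite coef_mapv; auto.
  - apply lin_comb. apply HT.
Qed.

Lemma conv_flat {X : NormedSpace} (A : X -> Prop) (l : list (R * X)) :
  Forall (fun p => 0 <= fst p /\ conv A (snd p)) l ->
  exists l', Forall (fun p => 0 <= fst p /\ A (snd p)) l' /\
    coef_sum l' = coef_sum l /\ comb l' = comb l.
Proof.
  intro H; induction H as [|[a y] l [H1 H2] H IH]; simpl in *.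
  - exists nil; simpl; auto.
  - destruct IH as [l' [F1 [F2 F3]]]. destruct H2 as [m [M1 [M2 M3]]].
    exists (scale_list a m ++ l'). split; [|split].
    + apply Forall_app; split; auto. apply Forall_scale; auto.
    + rewrite coef_app, coef_scale, M2, F2; ring.
    + rewrite comb_app, comb_scale, F3, M3; auto.
Qed.

Lemma conv_conv {X : NormedSpace} (A : X -> Prop) (z : X) : conv (conv A) z -> conv A z.
Proof.
  intros [l [H1 [H2 ->]]]. destruct (conv_flat A l H1) as [l' [F1 [F2 F3]]].
  exists l'; split; [|split]; auto. congruence.
Qed.

Lemma conv_ball {X : NormedSpace} (A : X -> Prop) (z : X) :
  (forall y, A y -> B_X y) -> conv A z -> B_X z.
Proof.
  intros HA [l [H1 [H2 ->]]]. unfold B_X.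
  eapply Rle_trans. apply norm_comb. eapply Forall_weaken; [|exact H1]; simpl; tauto.
  eapply Rle_trans. apply (wsum_bound 1). eapply Forall_weaken; [|exact H1]; simpl.
  intros p [? ?]; split; auto. apply HA; auto.
  rewrite H2; lra.
Qed.


Definition sublin {X : NormedSpace} (p : X -> R) : Prop :=
  (forall x y, p (vadd x y) <= p x + p y) /\ (forall t x, 0 < t -> p (vscal t x) = t * p x).

Definition valid {X : NormedSpace} (p : X -> R) (G : X -> R -> Prop) : Prop :=
  (forall x a a', G x a -> G x a' -> a = a') /\ G vzero 0 /\
  (forall x y a c, G x a -> G y c -> G (vadd x y) (a + c)) /\
  (forall t x a, G x a -> G (vscal t x) (t * a)) /\
  (forall x a, G x a -> a <= p x).

Lemma move_eq {X : NormedSpace} (y w x : X) t : vadd y (vscal t x) = w -> y = vadd w (vscal (-t) x).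
Proof.
  intro E. subst w. rewrite <- vadd_assoc, vscal_add_same. replace (t + - t) with 0 by ring.
  rewrite vscal_0, vadd_0; auto.
Qed.

Lemma one_step {X : NormedSpace} (p : X -> R) (G : X -> R -> Prop) (x0 : X) :
  sublin p -> valid p G -> (forall a, ~ G x0 a) ->
  exists G', valid p G' /\ (forall x a, G x a -> G' x a) /\ exists al, G' x0 al.
Proof.
  intros [Psub Phom] [V1 [V2 [V3 [V4 V5]]]] Hx0.
  set (E := fun r => exists y a, G y a /\ r = a - p (vadd y (vscal (-1) x0))).
  assert (Key : forall y1 a1 y2 a2, G y1 a1 -> G y2 a2 ->
     a1 - p (vadd y1 (vscal (-1) x0)) <= p (vadd y2 x0) - a2).
  { intros y1 a1 y2 a2 G1 G2.
    pose proof (V5 _ _ (V3 _ _ _ _ G1 G2)) as H.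
    pose proof (Psub (vadd y1 (vscal (-1) x0)) (vadd y2 x0)) as H'.
    rewrite vadd_shuffle, (vadd_comm (vscal (-1) x0) x0), vsub_self, vadd_0 in H'. lra. }
  assert (Hb : bound E).
  { exists (p (vadd vzero x0) - 0). intros r [y [a [Ga ->]]]. apply Key; auto. }
  assert (Hne : exists r, E r).
  { exists (0 - p (vadd vzero (vscal (-1) x0))). exists vzero, 0; auto. }
  destruct (completeness E Hb Hne) as [al [Hal1 Hal2]].
  assert (Lo : forall y a, G y a -> a - p (vadd y (vscal (-1) x0)) <= al).
  { intros y a Ga. apply Hal1. exists y, a; auto. }
  assert (Hi : forall y a, G y a -> al <= p (vadd y x0) - a).
  { intros y a Ga. apply Hal2. intros r [y' [a' [Ga' ->]]]. apply Key; auto. }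
  set (G' := fun z c => exists y a t, G y a /\ z = vadd y (vscal t x0) /\ c = a + t * al).
  exists G'. split; [|split].
  2:{ intros x a Ga. exists x, a, 0. rewrite vscal_0, vadd_0. split; auto. split; auto. ring. }
  2:{ exists al, vzero, 0, 1. split; auto. rewrite vadd_0l, vscal_1. split; auto. ring. }
  split; [|split; [|split; [|split]]].
  - intros z c c' [y1 [a1 [t1 [G1 [Z1 C1]]]]] [y2 [a2 [t2 [G2 [Z2 C2]]]]].
    subst c c'. rewrite Z1 in Z2. apply move_eq in Z2.
    rewrite <- vadd_assoc, vscal_add_same in Z2.
    destruct (Req_dec t1 t2) as [Et|Nt].
    + subst t2. replace (t1 + - t1) with 0 in Z2 by ring. rewrite vscal_0, vadd_0 in Z2.
      subst y1. rewrite (V1 _ _ _ G1 G2). ring.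
    + exfalso. apply (Hx0 (/ (t2 + - t1) * (a1 + -1 * a2))).
      assert (Gd := V3 _ _ _ _ G1 (V4 (-1) _ _ G2)).
      apply (V4 (/ (t2 + - t1))) in Gd. rewrite Z2 in Gd.
      idtac.
      rewrite <- vadd_assoc, (vadd_comm _ (vscal (-1) y2)), vadd_assoc, vsub_self, vadd_0l, vscal_assoc in Gd.
      rewrite Rinv_l, vscal_1 in Gd; auto. intro; apply Nt; lra.
  - exists vzero, 0, 0. rewrite vscal_0, vadd_0; split; auto. split; auto. ring.
  - intros x y a c [y1 [a1 [t1 [G1 [Z1 C1]]]]] [y2 [a2 [t2 [G2 [Z2 C2]]]]].
    exists (vadd y1 y2), (a1 + a2), (t1 + t2). split; auto. split.
    + subst. rewrite vadd_shuffle, vscal_add_same; auto.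
    + subst; ring.
  - intros s x a [y1 [a1 [t1 [G1 [Z1 C1]]]]].
    exists (vscal s y1), (s * a1), (s * t1). split; auto. split.
    + subst. rewrite vscal_distr_v, vscal_assoc; auto.
    + subst; ring.
  - intros z c [y [a [t [Ga [Z C]]]]]. subst z c.
    destruct (Rtotal_order t 0) as [Hneg|[H0|Hpos]].
    + set (s := - t). assert (Hs : 0 < s) by (unfold s; lra).
      pose proof (Lo _ _ (V4 (/ s) _ _ Ga)) as L.
      assert (Eq : vadd y (vscal t x0) = vscal s (vadd (vscal (/ s) y) (vscal (-1) x0))).
      { rewrite vscal_distr_v, !vscal_assoc, Rinv_r, vscal_1 by (intro; lra). f_equal. f_equal. unfold s; ring. }
      rewrite Eq, Phom by auto.
      set (P := p (vadd (vscal (/ s) y) (vscal (-1) x0))) in *.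
      assert (s * (/ s * a - P) <= s * al) by (apply Rmult_le_compat_l; lra).
      assert (s * (/ s * a - P) = a - s * P) by (field; lra).
      replace t with (- s) by (unfold s; ring). lra.
    + subst t. rewrite vscal_0, vadd_0. replace (a + 0 * al) with a by ring. auto.
    + pose proof (Hi _ _ (V4 (/ t) _ _ Ga)) as L.
      assert (Eq : vadd y (vscal t x0) = vscal t (vadd (vscal (/ t) y) x0)).
      { rewrite vscal_distr_v, !vscal_assoc, Rinv_r, vscal_1 by (intro; lra). auto. }
      rewrite Eq, Phom by auto.
      set (P := p (vadd (vscal (/ t) y) x0)) in *.
      assert (t * al <= t * (P - / t * a)) by (apply Rmult_le_compat_l; lra).
      assert (t * (P - / t * a) = t * P - a) by (field; lra). lra.
Qed.


Definition subg {X : NormedSpace} (G H : X -> R -> Prop) : Prop := forall x a, G x a -> H x a.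

Lemma subg_antisym {X : NormedSpace} (G H : X -> R -> Prop) : subg G H -> subg H G -> G = H.
Proof.
  intros H1 H2. apply functional_extensionality; intro x.
  apply functional_extensionality; intro a. apply propositional_extensionality; split; auto.
Qed.

Definition total {X : NormedSpace} (G : X -> R -> Prop) : Prop := forall x, exists a, G x a.

Definition stepP {X : NormedSpace} (p : X -> R) (G H : X -> R -> Prop) : Prop :=
  subg G H /\ (valid p G -> valid p H) /\ (valid p G -> ~ total G -> ~ subg H G).

Definition step {X : NormedSpace} (p : X -> R) (G : X -> R -> Prop) : X -> R -> Prop :=
  epsilon (inhabits G) (stepP p G).



Lemma step_ok {X : NormedSpace} (p : X -> R) (G : X -> R -> Prop) :
  sublin p -> stepP p G (step p G).
Proof.
  intro Hp. unfold step. apply epsilon_spec.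
  destruct (classic (valid p G /\ ~ total G)) as [[Hv Ht]|Hn].
  - apply not_all_ex_not in Ht. destruct Ht as [x0 Hx0].
    assert (Hx : forall a, ~ G x0 a) by (intros a Ha; apply Hx0; eauto).
    destruct (one_step p G x0 Hp Hv Hx) as [G' [V' [S' [al Hal]]]].
    exists G'. split; [|split]; auto. intros _ _ Hs. apply (Hx al). auto.
  - exists G. split; [|split]. intros x a; auto. auto. intros Hv Ht; exfalso; tauto.
Qed.

Definition bsup {X : NormedSpace} (b : X -> R -> Prop) (F : (X -> R -> Prop) -> Prop) :
  X -> R -> Prop := fun x a => b x a \/ exists G, F G /\ G x a.

Inductive tw {X : NormedSpace} (p : X -> R) (b : X -> R -> Prop) : (X -> R -> Prop) -> Prop :=
| tw_step : forall G, tw p b G -> tw p b (step p G)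
| tw_sup : forall F, (forall G, F G -> tw p b G) -> tw p b (bsup b F).

Lemma tw_base {X : NormedSpace} (p : X -> R) b : sublin p -> forall G, tw p b G -> subg b G.
Proof.
  intros Hp G HG. induction HG as [G HG IH|F HF IH].
  - intros x a H. apply (proj1 (step_ok p G Hp)). auto.
  - intros x a H. left; auto.
Qed.

Definition extreme {X : NormedSpace} (p : X -> R) b (c : X -> R -> Prop) : Prop :=
  forall x, tw p b x -> subg x c -> ~ subg c x -> subg (step p x) c.

Lemma extreme_lemma {X : NormedSpace} (p : X -> R) b (c : X -> R -> Prop) :
  sublin p -> tw p b c -> extreme p b c ->
  forall x, tw p b x -> subg x c \/ subg (step p c) x.
Proof.
  intros Hp Hc Ec x Hx. induction Hx as [x Hx IH|F HF IH].
  - destruct IH as [H|H].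
    + destruct (classic (subg c x)) as [H'|H'].
      * right. rewrite (subg_antisym x c H H'). intros z a; auto.
      * left. apply Ec; auto.
    + right. intros z a Hz. apply (proj1 (step_ok p x Hp)). auto.
  - destruct (classic (forall G, F G -> subg G c)) as [Hall|Hn].
    + left. intros z a [Hz|[G [FG Gz]]]. apply (tw_base p b Hp c Hc); auto. apply (Hall G); auto.
    + right. apply not_all_ex_not in Hn. destruct Hn as [G HG].
      apply imply_to_and in HG. destruct HG as [FG HG].
      destruct (IH G FG) as [H|H]. contradiction.
      intros z a Hz. right. exists G; split; auto.
Qed.

Lemma all_extreme {X : NormedSpace} (p : X -> R) b :
  sublin p -> forall c, tw p b c -> extreme p b c.
Proof.
  intros Hp c Hc. induction Hc as [c Hc IH|F HF IH].
  - intros x Hx H1 H2.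
    destruct (extreme_lemma p b c Hp Hc IH x Hx) as [H|H]; [|contradiction].
    destruct (classic (subg c x)) as [H'|H'].
    + rewrite (subg_antisym x c H H'). intros z a; auto.
    + intros z a Hz. apply (proj1 (step_ok p c Hp)). apply (IH x Hx H H'). auto.
  - intros x Hx H1 H2.
    assert (exists G, F G /\ ~ subg G x) as [G [FG HG]].
    { apply NNPP; intro Hn. apply H2. intros z a [Hz|[G [FG Gz]]].
      apply (tw_base p b Hp x Hx); auto.
      apply NNPP; intro Hz'. apply Hn. exists G; split; auto. }
    destruct (extreme_lemma p b G Hp (HF G FG) (IH G FG) x Hx) as [H|H].
    + intros z a Hz. right. exists G; split; auto. apply (IH G FG x Hx H HG). auto.
    + exfalso. apply HG. intros z a Hz. apply H. apply (proj1 (step_ok p G Hp)). auto.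
Qed.

Lemma tw_chain {X : NormedSpace} (p : X -> R) b :
  sublin p -> forall x y, tw p b x -> tw p b y -> subg x y \/ subg y x.
Proof.
  intros Hp x y Hx Hy.
  destruct (extreme_lemma p b y Hp Hy (all_extreme p b Hp y Hy) x Hx) as [H|H]; auto.
  right. intros z a Hz. apply H. apply (proj1 (step_ok p y Hp)). auto.
Qed.

Lemma tw_valid {X : NormedSpace} (p : X -> R) b :
  sublin p -> valid p b -> forall G, tw p b G -> valid p G.
Proof.
  intros Hp Hb G HG. induction HG as [G HG IH|F HF IH].
  - apply (proj1 (proj2 (step_ok p G Hp))); auto.
  -
    assert (Hbt : tw p b b).
    { assert (E : bsup b (fun _ => False) = b).
      { apply subg_antisym; intros x c; unfold bsup; firstorder. }
      pose proof (tw_sup p b (fun _ => False) (fun _ f => match f with end)) as T.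
      rewrite E in T; exact T. }
    assert (Hin : forall z a, bsup b F z a -> exists H, tw p b H /\ valid p H /\ subg H (bsup b F) /\ H z a).
    { intros z a [Hz|[G [FG Gz]]].
      - exists b. split; [|split; [|split]]; auto.
        + intros x c Hx; left; auto.
      - exists G. split; [|split; [|split]]; auto. intros x c Hx; right; eauto. }
    assert (Two : forall z1 a1 z2 a2, bsup b F z1 a1 -> bsup b F z2 a2 ->
       exists H, valid p H /\ subg H (bsup b F) /\ H z1 a1 /\ H z2 a2).
    { intros z1 a1 z2 a2 E1 E2. destruct (Hin _ _ E1) as [H1 [T1 [V1 [S1 I1]]]].
      destruct (Hin _ _ E2) as [H2 [T2 [V2 [S2 I2]]]].
      destruct (tw_chain p b Hp H1 H2 T1 T2) as [S|S].
      - exists H2; split; [|split; [|split]]; auto.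
      - exists H1; split; [|split; [|split]]; auto. }
    split; [|split; [|split; [|split]]].
    + intros x a a' E1 E2. destruct (Two _ _ _ _ E1 E2) as [H [[V _] [_ [I1 I2]]]]. eauto.
    + left. apply Hb.
    + intros x y a c E1 E2. destruct (Two _ _ _ _ E1 E2) as [H [[_ [_ [V _]]] [S [I1 I2]]]]. auto.
    + intros t x a E. destruct (Hin _ _ E) as [H [_ [[_ [_ [_ [V _]]]] [S I]]]]. auto.
    + intros x a E. destruct (Hin _ _ E) as [H [_ [[_ [_ [_ [_ V]]]] [S I]]]]. auto.
Qed.

Theorem hahn_banach {X : NormedSpace} (p : X -> R) (b : X -> R -> Prop) :
  sublin p -> valid p b ->
  exists F : X -> R, (forall x y, F (vadd x y) = F x + F y) /\
    (forall a x, F (vscal a x) = a * F x) /\ (forall x, F x <= p x) /\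
    (forall x c, b x c -> F x = c).
Proof.
  intros Hp Hb.
  set (U := bsup b (tw p b)).
  assert (TU : tw p b U) by (apply tw_sup; auto).
  assert (VU : valid p U) by (apply (tw_valid p b Hp Hb); auto).
  assert (Tot : total U).
  { apply NNPP; intro Hn. destruct (step_ok p U Hp) as [_ [_ H3]].
    apply (H3 VU Hn). intros x a Hx. right. exists (step p U). split; auto. apply tw_step; auto. }
  destruct (choice (fun x a => U x a) Tot) as [F HF].
  destruct VU as [V1 [V2 [V3 [V4 V5]]]].
  exists F. split; [|split; [|split]].
  - intros x y. apply (V1 (vadd x y)); auto.
  - intros a x. apply (V1 (vscal a x)); auto.
  - intros x; auto.
  - intros x c Hx. apply (V1 x); auto. left; auto.
Qed.


Definition infP (E : R -> Prop) (m : R) : Prop :=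
  (forall v, E v -> m <= v) /\ (forall w, (forall v, E v -> w <= v) -> w <= m).

Definition infR (E : R -> Prop) : R := epsilon (inhabits 0) (infP E).

Lemma infR_spec (E : R -> Prop) : (exists v, E v) -> (forall v, E v -> 0 <= v) -> infP E (infR E).
Proof.
  intros [v0 Hv0] Hpos. unfold infR. apply epsilon_spec.
  destruct (completeness (fun r => E (- r))) as [m [M1 M2]].
  - exists 0. intros r Hr. specialize (Hpos _ Hr). lra.
  - exists (- v0). rewrite Ropp_involutive; auto.
  - exists (- m). split.
    + intros v Ev. assert (- v <= m) by (apply M1; rewrite Ropp_involutive; auto). lra.
    + intros w Hw. assert (m <= - w). { apply M2. intros r Hr. specialize (Hw _ Hr). lra. } lra.
Qed.

Lemma coef_nonneg {X : NormedSpace} (A : X -> Prop) l :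
  Forall (fun p => 0 <= fst p /\ A (snd p)) l -> 0 <= coef_sum l.
Proof. intro H; induction H as [|[a y] l [H1 H2] H IH]; simpl in *; lra. Qed.

Definition Qc {X : NormedSpace} (x : X) (lam : R) (w : X) : Prop :=
  exists l, Forall (fun p => 0 <= fst p /\ orbit x (snd p)) l /\ coef_sum l = lam /\ w = comb l.

Lemma Qc_norm {X : NormedSpace} (x : X) lam w : S_X x -> Qc x lam w -> 0 <= lam /\ vnorm w <= lam.
Proof.
  intros Hx [l [H1 [H2 ->]]]. split. rewrite <- H2; eapply coef_nonneg; eauto.
  eapply Rle_trans. apply norm_comb. eapply Forall_weaken; [|exact H1]; simpl; tauto.
  eapply Rle_trans. apply (wsum_bound 1). eapply Forall_weaken; [|exact H1]; simpl.
  intros p [? Ho]; split; auto. rewrite (orbit_norm _ _ Ho). unfold S_X in Hx; lra.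
  rewrite H2; lra.
Qed.

Definition Sz {X : NormedSpace} (x : X) (K : R) (z : X) (v : R) : Prop :=
  exists lam w, Qc x lam w /\ v = lam + K * vnorm (vadd z (vscal (-1) w)).

Definition gauge {X : NormedSpace} (x : X) (K : R) (z : X) : R := infR (Sz x K z).

Lemma gauge_spec {X : NormedSpace} (x : X) K z : S_X x -> 0 < K -> infP (Sz x K z) (gauge x K z).
Proof.
  intros Hx HK. apply infR_spec.
  - exists (0 + K * vnorm (vadd z (vscal (-1) vzero))). exists 0, vzero. split; auto.
    exists nil. simpl; auto.
  - intros v [lam [w [Hq ->]]]. destruct (Qc_norm x lam w Hx Hq).
    pose proof (vnorm_nonneg (vadd z (vscal (-1) w))). nra.
Qed.

Lemma Qc_add {X : NormedSpace} (x : X) l1 w1 l2 w2 : Qc x l1 w1 -> Qc x l2 w2 -> Qc x (l1 + l2) (vadd w1 w2).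
Proof.
  intros [m1 [A1 [B1 ->]]] [m2 [A2 [B2 ->]]]. exists (m1 ++ m2). split; [|split].
  apply Forall_app; auto. rewrite coef_app; congruence. rewrite comb_app; auto.
Qed.

Lemma Qc_scal {X : NormedSpace} (x : X) t l w : 0 <= t -> Qc x l w -> Qc x (t * l) (vscal t w).
Proof.
  intros Ht [m [A [B ->]]]. exists (scale_list t m). split; [|split].
  apply Forall_scale; auto. rewrite coef_scale; congruence. rewrite comb_scale; auto.
Qed.

Lemma gauge_sublin {X : NormedSpace} (x : X) K : S_X x -> 0 < K -> sublin (gauge x K).
Proof.
  intros Hx HK.
  assert (Hle : forall t z, 0 < t -> gauge x K (vscal t z) <= t * gauge x K z).
  { intros t z Ht. destruct (gauge_spec x K (vscal t z) Hx HK) as [G1 _].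
    destruct (gauge_spec x K z Hx HK) as [_ G2].
    assert (/ t * gauge x K (vscal t z) <= gauge x K z).
    { apply G2. intros v [lam [w [Hq ->]]].
      assert (gauge x K (vscal t z) <= t * (lam + K * vnorm (vadd z (vscal (-1) w)))).
      { replace (t * (lam + K * vnorm (vadd z (vscal (-1) w)))) with
          (t * lam + K * vnorm (vadd (vscal t z) (vscal (-1) (vscal t w)))).
        apply G1. exists (t * lam), (vscal t w). split; auto. apply Qc_scal; auto; lra.
        replace (vadd (vscal t z) (vscal (-1) (vscal t w))) with (vscal t (vadd z (vscal (-1) w)))
          by (rewrite vscal_distr_v, !vscal_assoc, (Rmult_comm t (-1)); auto).
        rewrite vnorm_scal, Rabs_pos_eq by lra. ring. }
      apply (Rmult_le_reg_l t); auto. field_simplify; lra. }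
    apply (Rmult_le_compat_l t) in H; try lra. field_simplify in H; lra. }
  split.
  - intros z1 z2. destruct (gauge_spec x K (vadd z1 z2) Hx HK) as [G1 _].
    destruct (gauge_spec x K z1 Hx HK) as [_ H1].
    destruct (gauge_spec x K z2 Hx HK) as [_ H2].
    assert (gauge x K (vadd z1 z2) - gauge x K z1 <= gauge x K z2); [|lra].
    apply H2. intros v2 [l2 [w2 [Q2 ->]]].
    assert (gauge x K (vadd z1 z2) - (l2 + K * vnorm (vadd z2 (vscal (-1) w2))) <= gauge x K z1); [|lra].
    apply H1. intros v1 [l1 [w1 [Q1 ->]]].
    assert (gauge x K (vadd z1 z2) <= (l1 + l2) + K * vnorm (vadd (vadd z1 z2) (vscal (-1) (vadd w1 w2)))).
    { apply G1. exists (l1 + l2), (vadd w1 w2). split; auto. apply Qc_add; auto. }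
    rewrite vscal_distr_v, vadd_shuffle in H.
    pose proof (vnorm_triangle (vadd z1 (vscal (-1) w1)) (vadd z2 (vscal (-1) w2))). nra.
  - intros t z Ht. apply Rle_antisym; auto.
    pose proof (Hle (/ t) (vscal t z) ltac:(apply Rinv_0_lt_compat; auto)) as H.
    rewrite vscal_assoc, Rinv_l, vscal_1 in H by lra.
    apply (Rmult_le_compat_l t) in H; try lra. rewrite <- Rmult_assoc, Rinv_r, Rmult_1_l in H; lra.
Qed.


Lemma separation {X : NormedSpace} (x u : X) :
  S_X x -> vnorm u = 1 -> ~ closure (conv (orbit x)) u ->
  exists F, is_dual_elt F /\ 1 < F u /\ forall y, orbit x y -> F y <= 1.
Proof.
  intros Hx Hu Hn.
  assert (exists eps, eps > 0 /\ forall y, conv (orbit x) y -> eps <= vnorm (vadd u (vscal (-1) y)))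
    as [eps [He Hsep]].
  { apply NNPP; intro H. apply Hn. intros eps Heps. apply NNPP; intro H2. apply H.
    exists eps; split; auto. intros y Hy. apply Rnot_lt_le. intro Hl. apply H2.
    exists y; split; auto. rewrite vsub_scal; auto. }
  set (e := Rmin eps 1).
  assert (He1 : 0 < e) by (unfold e; apply Rmin_glb_lt; lra).
  assert (He2 : e <= 1) by (unfold e; apply Rmin_r).
  assert (He3 : e <= eps) by (unfold e; apply Rmin_l).
  set (K := 2 / e). assert (HK : 0 < K) by (unfold K; apply Rdiv_lt_0_compat; lra).
  set (p := gauge x K).
  pose proof (gauge_sublin x K Hx HK) as Hp. fold p in Hp.
  assert (Hps : forall z, infP (Sz x K z) (p z)) by (intro; apply gauge_spec; auto).
  assert (Hpos : forall z, 0 <= p z).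
  { intro z. apply (proj2 (Hps z)). intros v [lam [w [Hq ->]]]. destruct (Qc_norm x lam w Hx Hq).
    pose proof (vnorm_nonneg (vadd z (vscal (-1) w))). nra. }
  assert (HpK : forall z, p z <= K * vnorm z).
  { intro z. replace (K * vnorm z) with (0 + K * vnorm (vadd z (vscal (-1) vzero))).
    apply (proj1 (Hps z)). exists 0, vzero. split; auto. exists nil; simpl; auto.
    rewrite vscal_zero, vadd_0; ring. }
  assert (Hp1 : forall y, orbit x y -> p y <= 1).
  { intros y Hy. replace 1 with (1 + K * vnorm (vadd y (vscal (-1) y))).
    apply (proj1 (Hps y)). exists 1, y. split; auto.
    exists ((1, y) :: nil). simpl. split. constructor; auto; simpl; split; auto; lra.
    split. ring. rewrite vscal_1, vadd_0; auto.
    rewrite vsub_self, vnorm_zero; ring. }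
  assert (Hpu : 1 < p u).
  { apply Rlt_le_trans with (1 + e / 2); [lra|]. apply (proj2 (Hps u)).
    intros v [lam [w [Hq ->]]]. destruct (Qc_norm x lam w Hx Hq) as [Hl Hw].
    pose proof (vnorm_nonneg (vadd u (vscal (-1) w))) as Hnn.
    destruct (Rle_lt_dec (1 + e / 2) lam) as [H1|H1].
    { pose proof (Rmult_le_pos K _ (Rlt_le _ _ HK) Hnn). lra. }
    destruct (Rle_lt_dec lam 1) as [H2|H2].
    -
      assert (Cw : conv (orbit x) w).
      { destruct Hq as [l [L1 [L2 ->]]]. set (h := (1 - lam) / 2).
        exists (l ++ (h, x) :: (h, vscal (-1) x) :: nil). split; [|split].
        - apply Forall_app; split; auto. unfold h.
          constructor. split; simpl; [lra|apply orbit_self].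
          constructor. split; simpl; [lra|apply (orbit_T x x _ GX_neg), orbit_self].
          constructor.
        - rewrite coef_app; simpl. unfold h; lra.
        - rewrite comb_app; simpl. rewrite vadd_0, vscal_assoc, vscal_add_same.
          replace (h + h * -1) with 0 by ring. rewrite vscal_0, vadd_0; auto. }
      pose proof (Hsep w Cw).
      assert (K * vnorm (vadd u (vscal (-1) w)) >= K * e) by (apply Rle_ge, Rmult_le_compat_l; lra).
      assert (K * e = 2) by (unfold K; field; lra). lra.
    - assert (Hil : / lam < 1).
      { pose proof (Rinv_1_lt_contravar 1 lam (Rle_refl 1) H2). rewrite Rinv_1 in H; auto. }
      assert (Cc : conv (orbit x) (vscal (/ lam) w)).
      { destruct Hq as [l [L1 [L2 ->]]]. exists (scale_list (/ lam) l). split; [|split].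
        apply Forall_scale; auto. left; apply Rinv_0_lt_compat; lra.
        rewrite coef_scale, L2. field; lra. rewrite comb_scale; auto. }
      pose proof (Hsep _ Cc) as Hs.
      pose proof (vnorm_sub_tri u w (vscal (/ lam) w)) as Ht.
      assert (Ew : vnorm (vadd w (vscal (-1) (vscal (/ lam) w))) = (1 - / lam) * vnorm w).
      { rewrite vscal_assoc. rewrite <- (vscal_1 w) at 1. rewrite vscal_add_same, vnorm_scal.
        rewrite Rabs_pos_eq. ring. lra. }
      assert ((1 - / lam) * vnorm w <= (1 - / lam) * lam).
      { apply Rmult_le_compat_l; auto. lra. }
      assert ((1 - / lam) * lam = lam - 1) by (field; lra).
      assert (K * vnorm (vadd u (vscal (-1) w)) >= K * (e / 2)) by (apply Rle_ge, Rmult_le_compat_l; lra).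
      assert (K * (e / 2) = 1) by (unfold K; field; lra). lra. }
  set (b := fun z c => exists t, z = vscal t u /\ c = t * p u).
  assert (Vb : valid p b).
  { split; [|split; [|split; [|split]]].
    - intros z c c' [t1 [Z1 C1]] [t2 [Z2 C2]]. subst c c'. rewrite Z1 in Z2.
      assert (E : vnorm (vadd (vscal t1 u) (vscal (-1) (vscal t2 u))) = 0) by (rewrite Z2, vsub_self; apply vnorm_zero).
      rewrite vscal_assoc, vscal_add_same, vnorm_scal, Hu in E.
      assert (Rabs (t1 + -1 * t2) = 0) by lra. destruct (Req_dec (t1 + -1 * t2) 0) as [H0|H0]; [|apply Rabs_no_R0 in H0; contradiction]. replace t2 with t1 by lra. auto.
    - exists 0. rewrite vscal_0; split; auto; ring.
    - intros z y a c [t1 [-> ->]] [t2 [-> ->]]. exists (t1 + t2). rewrite vscal_add_same; split; auto; ring.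
    - intros s z a [t [-> ->]]. exists (s * t). rewrite vscal_assoc; split; auto; ring.
    - intros z a [t [-> ->]]. destruct (Rtotal_order t 0) as [H|[H|H]].
      + pose proof (Hpos (vscal t u)). pose proof (Hpos u). nra.
      + subst. pose proof (Hpos (vscal 0 u)). lra.
      + rewrite (proj2 Hp) by auto. lra. }
  destruct (hahn_banach p b Hp Vb) as [F [F1 [F2 [F3 F4]]]].
  exists F. split; [|split].
  - split; [|split]; auto. exists K. intro z. apply Rabs_le. split.
    + pose proof (F3 (vscal (-1) z)) as A1. rewrite F2 in A1. pose proof (HpK (vscal (-1) z)) as A2.
      rewrite vnorm_opp1 in A2. lra.
    + eapply Rle_trans; [apply F3|apply HpK].
  - rewrite (F4 u (p u)); auto. exists 1. rewrite vscal_1; split; auto; ring.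
  - intros y Hy. eapply Rle_trans; [apply F3|apply Hp1; auto].
Qed.


Lemma closed_conv_ball {X : NormedSpace} (x z : X) : S_X x -> closed_conv (orbit x) z -> B_X z.
Proof.
  intros Hx Hz. unfold B_X. apply Rnot_lt_le; intro H.
  destruct (Hz (vnorm z - 1) ltac:(lra)) as [y [Hy Hd]].
  assert (By : B_X y).
  { apply (conv_ball (orbit x)); auto. intros w Hw. unfold B_X. rewrite (orbit_norm _ _ Hw). unfold S_X in Hx; lra. }
  unfold B_X in By. rewrite vsub_scal in Hd. pose proof (vnorm_rev z y). lra.
Qed.

Lemma approach {X : NormedSpace} (x u : X) : S_X x -> big_point u ->
  forall n : nat, exists T, in_GX T /\ 2 - / (INR n + 1) < vnorm (vadd x (T u)).
Proof.
  intros Hx [Hu Hb] n. set (eps := / (INR n + 1)).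
  assert (Heps : 0 < eps) by (unfold eps; apply Rinv_0_lt_compat; pose proof (pos_INR n); lra).
  assert (Bx : B_X x) by (unfold B_X, S_X in *; lra).
  destruct (proj2 (Hb x) Bx eps Heps) as [y [[l [L1 [L2 ->]]] Hd]].
  apply NNPP; intro Hn.
  assert (Hall : forall T, in_GX T -> vnorm (vadd x (T u)) <= 2 - eps).
  { intros T HT. apply Rnot_lt_le; intro H. apply Hn; exists T; split; auto. }
  assert (H1 : vnorm (vadd x (comb l)) <= 2 - eps).
  { replace (vadd x (comb l)) with (comb (mapv (vadd x) l)).
    2:{ rewrite comb_shift, L2, vscal_1; auto. }
    eapply Rle_trans. apply norm_comb.
    { clear -L1. induction L1 as [|[a y] l [H1 H2] H IH]; simpl in *; constructor; auto. }
    eapply Rle_trans. apply (wsum_bound (2 - eps)).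
    { clear -L1 Hall. induction L1 as [|[a y] l [H1 H2] H IH]; simpl in *; constructor; auto.
      simpl. split; auto. destruct H2 as [T [HT ->]]. auto. }
    rewrite coef_mapv, L2; lra. }
  assert (E : vadd (vadd x (comb l)) (vadd x (vscal (-1) (comb l))) = vscal 2 x).
  { rewrite vadd_shuffle, vsub_self, vadd_0.
    transitivity (vadd (vscal 1 x) (vscal 1 x)); [rewrite vscal_1; auto|].
    rewrite vscal_add_same; f_equal; ring. }
  pose proof (vnorm_triangle (vadd x (comb l)) (vadd x (vscal (-1) (comb l)))) as Ht.
  rewrite E, vnorm_scal in Ht. rewrite vsub_scal in Hd. unfold S_X in Hx. rewrite Hx in Ht.
  rewrite Rabs_pos_eq in Ht by lra. lra.
Qed.

Lemma approx_list {X : NormedSpace} (A B : X -> Prop) (d : R) (l : list (R * X)) :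
  (forall y, A y -> exists y', B y' /\ vnorm (vadd y (vscal (-1) y')) <= d) ->
  Forall (fun p => 0 <= fst p /\ A (snd p)) l ->
  exists l', Forall (fun p => 0 <= fst p /\ B (snd p)) l' /\ coef_sum l' = coef_sum l /\
    vnorm (vadd (comb l) (vscal (-1) (comb l'))) <= coef_sum l * d.
Proof.
  intros HAB H. induction H as [|[a y] l [H1 H2] H IH]; simpl in *.
  - exists nil; simpl. split; auto. split; auto. rewrite vscal_zero, vadd_0, vnorm_zero; lra.
  - destruct IH as [l' [F1 [F2 F3]]]. destruct (HAB y H2) as [y' [By Dy]].
    exists ((a, y') :: l'). simpl. split; [constructor; auto|split; [lra|]].
    replace (vadd (vadd (vscal a y) (comb l)) (vscal (-1) (vadd (vscal a y') (comb l'))))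
      with (vadd (vscal a (vadd y (vscal (-1) y'))) (vadd (comb l) (vscal (-1) (comb l')))).
    + eapply Rle_trans. apply vnorm_triangle. rewrite vnorm_scal, Rabs_pos_eq by auto.
      assert (a * vnorm (vadd y (vscal (-1) y')) <= a * d) by (apply Rmult_le_compat_l; auto). lra.
    + rewrite (vscal_distr_v (-1) (vscal a y')), vadd_shuffle, vscal_distr_v, !vscal_assoc.
      rewrite (Rmult_comm a (-1)); auto.
Qed.

Theorem main_thm (X : NormedSpace) (Hw : omega_LUR X)
  (u : X) (Hu : S_X u) (Hbig : big_point u) : convex_transitive X.
Proof.
  intros x Hx. split; auto. intro z. split; [apply closed_conv_ball; auto|]. intro Bz.
  assert (Hux : closure (conv (orbit x)) u).
  { apply NNPP; intro Hn.
    destruct (separation x u Hx Hu Hn) as [F [HF [Fu Fy]]].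
    destruct (choice (fun n T => in_GX T /\ 2 - / (INR n + 1) < vnorm (vadd x (T u))) (approach x u Hx Hbig))
      as [T HT].
    destruct (choice (fun n S => in_GX S /\ forall z, T n (S z) = z) (fun n => GX_inv (T n) (proj1 (HT n))))
      as [S HS].
    assert (Hn1 : forall n, vnorm (vadd u (S n x)) = vnorm (vadd x (T n u))).
    { intro n. destruct (HT n) as [[[L1 _] [N1 _]] _]. rewrite <- N1, L1, (proj2 (HS n)), vadd_comm; auto. }
    assert (Hwc : weak_cv (fun n => S n x) u).
    { apply Hw; auto.
      - intro n. unfold B_X. destruct (HS n) as [[_ [N _]] _]. rewrite N. unfold S_X in Hx; lra.
      - intros eps Heps. destruct (archimed_cor1 eps Heps) as [N [HN1 HN2]].
        exists N. intros n Hnn. unfold R_dist. rewrite Hn1.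
        pose proof (proj2 (HT n)) as A.
        assert (Bd : vnorm (vadd x (T n u)) <= 2).
        { eapply Rle_trans. apply vnorm_triangle. destruct (HT n) as [[_ [N1 _]] _]. rewrite N1.
          unfold S_X in *; lra. }
        assert (/ (INR n + 1) <= / INR N).
        { apply Rinv_le_contravar. apply lt_0_INR; auto. apply le_INR in Hnn. lra. }
        rewrite Rabs_left1 by lra. lra. }
    destruct (Hwc F HF (F u - 1) ltac:(lra)) as [N HN].
    specialize (HN N (le_n N)). unfold R_dist in HN.
    assert (F (S N x) <= 1).
    { apply Fy. exists (S N); split; auto. apply HS. }
    rewrite Rabs_left1 in HN by lra. lra. }
  intros eps Heps.
  destruct (proj2 (proj2 Hbig z) Bz (eps / 2) ltac:(lra)) as [w [[l [L1 [L2 ->]]] Hd]].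
  destruct (Hux (eps / 2) ltac:(lra)) as [v [Cv Huv]].
  rewrite vsub_scal in Hd, Huv.
  destruct (approx_list (orbit u) (conv (orbit x)) (vnorm (vadd u (vscal (-1) v))) l) as [l' [F1 [F2 F3]]]; auto.
  { intros y [T [HT ->]]. exists (T v). split. apply conv_T; auto.
    rewrite <- lin_sub by apply HT. destruct HT as [_ [N _]]. rewrite N; lra. }
  exists (comb l'). split.
  - apply conv_conv. exists l'. split; auto. split; auto. congruence.
  - rewrite vsub_scal. eapply Rle_lt_trans. apply (vnorm_sub_tri z (comb l) (comb l')).
    rewrite L2 in F3. lra.
Qed.

Theorem proposition3p4 (X : NormedSpace) (HX : complete X) (Hw : omega_LUR X)
  (u : X) (Hu : S_X u) (Hbig : big_point u) :
  convex_transitive X.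
Proof. exact (main_thm X Hw u Hu Hbig). Qed.
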